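(* Let $D$ be a tangle diagram with topmost region $0$. For each segment $i$ set \[ \mathcal{F}(w_i)=s^+_{i^{\uparrow}}\,x_i^+\,(x_i^-)^{-1}\,(s^+_{i^{\uparrow}})^{-1}, \] an automorphism of the object $0$ in $\Pi(D)$, where $w_i$ is the Wirtinger generator associated with $i$. Then $\mathcal{F}$ is a well-defined group homomorphism (functor) from the Wirtinger group $\pi(D)$ to the automorphism group of the object $0$ in $\Pi(D)$.
   Context: Tangle diagrams: $D$ is an oriented tangle diagram in $[0,1]^2$, viewed as a 4-valent graph. Segments are the edges of the graph; a strand is cut at each crossing, over or under. Regions are the components of the complement of the graph in the square. The topmost region $0$ is the region containing the top side of the square. Arcs are the maximal chains of segments joined at crossings where they pass over. Above and below: for a segment $i$, $i^{\uparrow}$ is the region on the left of $i$ with respect to its orientation and $i^{\downarrow}$ the one on its right. Crossing labels: rotate a crossing so both strands point right. The incoming segments are $1$ (upper left) and $2$ (lower left). The outgoing segments are $1'$ (lower right, continuing $1$) and $2'$ (upper right, continuing $2$). The crossing is positive if strand $1\to1'$ is over, negative if strand $2\to2'$ is over. Wirtinger group $\pi(D)$: one generator per arc, with $w_i$ the generator of the arc containing segment $i$. The relations are $w_{2'}=w_1^{-1}w_2w_1$ at each positive crossing and $w_{1'}=w_2w_1w_2^{-1}$ at each negative crossing. Fundamental groupoid $\Pi(D)$: objects are regions. There are generators $x_i^+,x_i^-:i^{\uparrow}\to i^{\downarrow}$ for each segment $i$ (paths passing over, respectively under, the segment). Composition is written left to right ($fg$ means $f$ then $g$). At each crossing the relations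 are $x_1^+x_2^+=x_{2'}^+x_{1'}^+$ and $x_1^-x_2^-=x_{2'}^-x_{1'}^-$, together with $x_1^-x_2^+=x_{2'}^+x_{1'}^-$ (positive crossing) or $x_1^+x_2^-=x_{2'}^-x_{1'}^+$ (negative crossing). Over paths: for a region $j$, choose a sequence of adjacent regions from $0$ to $j$ crossing segments $i_1,\dots,i_k$, and set $s_j^+=(x_{i_1}^+)^{\epsilon_1}\cdots(x_{i_k}^+)^{\epsilon_k}$. Here $\epsilon_t=+1$ if segment $i_t$ is crossed from $i_t^{\uparrow}$ to $i_t^{\downarrow}$ and $-1$ otherwise. This morphism $0\to j$ is independent of the chosen sequence. *)

(* Defs.v *)
From mathcomp Require Import all_boot.
From Stdlib Require Import Relations.

Set Implicit Arguments.
Unset Strict Implicit.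
Unset Printing Implicit Defensive.

(*  dseg  : segments (edges of the 4-valent graph)                    *)
(*  dreg  : regions (components of the complement in the square)      *)
(*  dtop  : the topmost region 0                                      *)
(*  dup i = i^up (region on the left of i), ddown i = i^down (right)  *)
(*  din1 c, din2 c, dout1 c, dout2 c : segments 1, 2, 1', 2' at c     *)
(*     (labels after rotating c so that both strands point right)     *)
(*  dpos c : c is positive (strand 1 -> 1' is over)                   *)
Record diagram := Diagram {
  dseg : Type;
  dreg : Type;
  dcrs : Type;
  dtop : dreg;
  dup : dseg -> dreg;
  ddown : dseg -> dreg;
  din1 : dcrs -> dseg;
  din2 : dcrs -> dseg;
  dout1 : dcrs -> dseg;
  dout2 : dcrs -> dseg;
  dpos : dcrs -> bool }.

Section Diagram.
Variable D : diagram.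

(* Region incidence around a crossing forced by the labelling:
   regions T (above 1 and 2'), L (between 1 and 2), B (below 2, 1'),
   R (between 2' and 1'); 1: T->L, 2: L->B, 2': T->R, 1': R->B. *)
Definition crossing_incidence : Prop :=
  forall c : dcrs D,
    [/\ dup (din1 c) = dup (dout2 c), ddown (din1 c) = dup (din2 c),
        ddown (din2 c) = ddown (dout1 c) & ddown (dout2 c) = dup (dout1 c)].

(* letter (i, o, e): o = true for x_i^+ (over), false for x_i^- (under);
   e = true for the formal inverse of that generator.                  *)
Definition gletter := (dseg D * bool * bool)%type.

Definition gx (i : dseg D) (o : bool) : gletter := (i, o, false).
Definition gflip (l : gletter) : gletter := (l.1.1, l.1.2, ~~ l.2).

Definition gsrc (l : gletter) : dreg D :=
  if l.2 then ddown l.1.1 else dup l.1.1.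
Definition gtgt (l : gletter) : dreg D :=
  if l.2 then dup l.1.1 else ddown l.1.1.

(* w is a composable word (path) from a to b; composition left to right *)
Fixpoint is_gpath (a : dreg D) (w : seq gletter) (b : dreg D) : Prop :=
  match w with
  | [::] => a = b
  | l :: w' => gsrc l = a /\ is_gpath (gtgt l) w' b
  end.

Definition ginvword (w : seq gletter) : seq gletter := rev (map gflip w).

Inductive crossing_rel : seq gletter -> seq gletter -> Prop :=
| cr_over c :
    crossing_rel [:: gx (din1 c) true; gx (din2 c) true]
                 [:: gx (dout2 c) true; gx (dout1 c) true]
| cr_under c :
    crossing_rel [:: gx (din1 c) false; gx (din2 c) false]
                 [:: gx (dout2 c) false; gx (dout1 c) false]
| cr_pos c : dpos c = true ->
    crossing_rel [:: gx (din1 c) false; gx (din2 c) true]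
                 [:: gx (dout2 c) true; gx (dout1 c) false]
| cr_neg c : dpos c = false ->
    crossing_rel [:: gx (din1 c) true; gx (din2 c) false]
                 [:: gx (dout2 c) false; gx (dout1 c) true].

Inductive gstep : seq gletter -> seq gletter -> Prop :=
| gs_cancel u l v : gstep (u ++ l :: gflip l :: v) (u ++ v)
| gs_rel u r s v : crossing_rel r s -> gstep (u ++ r ++ v) (u ++ s ++ v).

(* equality of morphisms a -> b in Pi(D): the equivalence relation on
   paths a -> b generated by free cancellation and the relations. *)
Definition gstep_ab (a b : dreg D) (u v : seq gletter) : Prop :=
  [/\ gstep u v, is_gpath a u b & is_gpath a v b].

Definition gequiv (a b : dreg D) : relation (seq gletter) :=
  fun u v => [/\ is_gpath a u b, is_gpath a v b &
                 clos_refl_sym_trans _ (gstep_ab a b) u v].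

(* Over paths: sequences of adjacent regions from 0 to j crossing
   segments i_1..i_k, encoded as words in the (x_i^+)^{+-1}.          *)
Definition over_walk (j : dreg D) (w : seq gletter) : Prop :=
  all (fun l : gletter => l.1.2) w /\ is_gpath (dtop D) w j.

(* Arcs: maximal chains of segments joined at crossings where they pass
   over; i.e. the equivalence generated by 1 ~ 1' at positive and
   2 ~ 2' at negative crossings.                                      *)
Inductive over_next : dseg D -> dseg D -> Prop :=
| on_pos c : dpos c = true -> over_next (din1 c) (dout1 c)
| on_neg c : dpos c = false -> over_next (din2 c) (dout2 c).

Definition same_arc : relation (dseg D) := clos_refl_sym_trans _ over_next.

(* letter (i, e): w_i (generator of the arc containing i), inverted iff e *)
Definition wletter := (dseg D * bool)%type.

Inductive wirt_rel : seq wletter -> seq wletter -> Prop :=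
| wr_pos c : dpos c = true ->
    wirt_rel [:: (dout2 c, false)]
             [:: (din1 c, true); (din2 c, false); (din1 c, false)]
| wr_neg c : dpos c = false ->
    wirt_rel [:: (dout1 c, false)]
             [:: (din2 c, false); (din1 c, false); (din2 c, true)].

Inductive wstep : seq wletter -> seq wletter -> Prop :=
| ws_cancel u i e v : wstep (u ++ (i, e) :: (i, ~~ e) :: v) (u ++ v)
| ws_rel u r s v : wirt_rel r s -> wstep (u ++ r ++ v) (u ++ s ++ v)
| ws_arc u i j e v : same_arc i j -> wstep (u ++ (i, e) :: v) (u ++ (j, e) :: v).

Definition wequiv : relation (seq wletter) := clos_refl_sym_trans _ wstep.

(* Facts about genuine tangle diagrams that the paper uses: the crossing
   incidence, every region is reachable from 0, and the over path s_j^+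
   is independent of the chosen sequence of regions. *)
Definition tangle_diagram : Prop :=
  [/\ crossing_incidence,
      (forall j : dreg D, exists w, over_walk j w) &
      (forall (j : dreg D) w1 w2, over_walk j w1 -> over_walk j w2 ->
         gequiv (dtop D) j w1 w2)].

End Diagram.

(* Main.v *)
Require Import Defs.
From mathcomp Require Import all_boot.
From Stdlib Require Import Relations IndefiniteDescription.

Set Implicit Arguments.
Unset Strict Implicit.
Unset Printing Implicit Defensive.

Section Gen.
Variable D : diagram.

Notation inv := (@ginvword D).
Notation path := (@is_gpath D).
Implicit Types (a b c d T : dreg D) (u v w p q r s m x y W : seq (gletter D)) (l : gletter D).

Lemma path_cat a u b v c : path a u b -> path b v c -> path a (u ++ v) c.
Proof.
elim: u a => [|l u IH] a /=; first by move=> ->.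
by case=> Hs Hu Hv; split => //; exact: IH Hu Hv.
Qed.

Lemma path_catE a u v c : path a (u ++ v) c -> exists b, path a u b /\ path b v c.
Proof.
elim: u a => [|l u IH] a /=; first by move=> H; exists a.
case=> Hs /IH [b [H1 H2]]; exists b; split => //.
Qed.

Lemma gtgt_flip (l : gletter D) : gtgt (gflip l) = gsrc l.
Proof. by case: l => [[i o] []]. Qed.
Lemma gsrc_flip (l : gletter D) : gsrc (gflip l) = gtgt l.
Proof. by case: l => [[i o] []]. Qed.
Lemma gflipK (l : gletter D) : gflip (gflip l) = l.
Proof. by case: l => [[i o] []]. Qed.

Lemma inv_cat u v : inv (u ++ v) = inv v ++ inv u.
Proof. by rewrite /ginvword map_cat rev_cat. Qed.

Lemma inv_cons l u : inv (l :: u) = inv u ++ [:: gflip l].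
Proof. by rewrite /ginvword /= rev_cons -cats1. Qed.

Lemma invK u : inv (inv u) = u.
Proof.
rewrite /ginvword map_rev revK; elim: u => //= l u ->; by rewrite gflipK.
Qed.

Lemma path_inv a w b : path a w b -> path b (inv w) a.
Proof.
elim: w a => [|l w IH] a /=; first by move=> ->.
case=> Hs Hw; rewrite inv_cons; apply: path_cat (IH _ Hw) _ => /=.
by rewrite gsrc_flip gtgt_flip Hs.
Qed.

Hypothesis Hinc : crossing_incidence D.

Lemma crossing_rel_path r s a b : crossing_rel r s -> path a r b -> path a s b.
Proof.
case=> [c|c|c _|c _]; case: (Hinc c) => E1 E2 E3 E4;
rewrite /= /gsrc /gtgt /=; case=> <- [_ <-]; rewrite ?E1 ?E2 ?E3 ?E4; done.
Qed.

Lemma gstep_path u v a b : gstep u v -> path a u b -> path a v b.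
Proof.
case=> [u1 l v1|u1 r s v1 Hr] /path_catE [m [H1 H2]]; apply: path_cat H1 _.
  move: H2 => /= [Hs [_]]; by rewrite gtgt_flip Hs.
case/path_catE: H2 => m2 [H3 H4]; exact: path_cat (crossing_rel_path Hr H3) H4.
Qed.

Definition red := clos_refl_trans _ (@gstep D : relation (seq (gletter D))).

Lemma gstep_ctx (p q u v : seq (gletter D)) : gstep u v -> gstep (p ++ u ++ q) (p ++ v ++ q).
Proof.
case=> [u1 l v1|u1 r s v1 Hr].
  have H := gs_cancel (p ++ u1) l (v1 ++ q); rewrite -!catA in H; rewrite -!catA; exact H.
have H := gs_rel (p ++ u1) (v1 ++ q) Hr; rewrite -!catA in H; rewrite -!catA; exact H.
Qed.

Lemma red_ctx (p q u v : seq (gletter D)) : red u v -> red (p ++ u ++ q) (p ++ v ++ q).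
Proof.
elim=> [x y H|x|x y z _ IH1 _ IH2].
- by apply: rt_step; apply: gstep_ctx.
- exact: rt_refl.
- exact: rt_trans IH1 IH2.
Qed.

Lemma red_ctxl (p u v : seq (gletter D)) : red u v -> red (p ++ u) (p ++ v).
Proof. by move/(red_ctx p [::]); rewrite !cats0. Qed.
Lemma red_ctxr (q u v : seq (gletter D)) : red u v -> red (u ++ q) (v ++ q).
Proof. by move/(red_ctx [::] q). Qed.

Lemma red_cancel (w : seq (gletter D)) : red (w ++ inv w) [::].
Proof.
elim: w => [|l w IH]; first exact: rt_refl.
have -> : (l :: w) ++ inv (l :: w) = [:: l] ++ (w ++ inv w) ++ [:: gflip l].
  by rewrite inv_cons /= catA.
apply: rt_trans (red_ctx [:: l] [:: gflip l] IH) _.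
apply: rt_step; exact: (gs_cancel [::] l [::]).
Qed.

Lemma red_cancel_l (w : seq (gletter D)) : red (inv w ++ w) [::].
Proof. by have := red_cancel (inv w); rewrite invK. Qed.

Lemma gequiv_refl a b u : path a u b -> gequiv a b u u.
Proof. by move=> H; split => //; apply: rst_refl. Qed.
Lemma gequiv_sym a b u v : gequiv a b u v -> gequiv a b v u.
Proof. by case=> H1 H2 H3; split => //; apply: rst_sym. Qed.
Lemma gequiv_trans a b u v w : gequiv a b u v -> gequiv a b v w -> gequiv a b u w.
Proof. case=> H1 H2 H3 [_ H4 H5]; split => //; exact: rst_trans H3 H5. Qed.

Lemma red_gequiv a b W u : red W u -> path a W b -> gequiv a b W u.
Proof.
move=> Hr; elim: (clos_rt_rt1n _ _ _ _ Hr) => [x|x y z Hxy _ IH] Hx; first exact: gequiv_refl.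
have Hy := gstep_path Hxy Hx.
apply: gequiv_trans (IH Hy); split => //; apply: rst_step; by split.
Qed.

Lemma gequiv_ctx a b c d p q u v : path c p a -> path b q d ->
  gequiv a b u v -> gequiv c d (p ++ u ++ q) (p ++ v ++ q).
Proof.
move=> Hp Hq [H1 H2 H3]; split.
- by apply: path_cat Hp _; apply: path_cat H1 Hq.
- by apply: path_cat Hp _; apply: path_cat H2 Hq.
elim: H3 => [x y [Hxy Hx Hy]|x|x y _ IH|x y z _ IH1 _ IH2].
- apply: rst_step; split; first exact: gstep_ctx.
  + by apply: path_cat Hp _; apply: path_cat Hx Hq.
  + by apply: path_cat Hp _; apply: path_cat Hy Hq.
- exact: rst_refl.
- exact: rst_sym.
- exact: rst_trans IH1 IH2.
Qed.

Lemma gequiv_ctxl a b c p u v : path c p a -> gequiv a b u v -> gequiv c b (p ++ u) (p ++ v).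
Proof. by move=> Hp H; have := gequiv_ctx (q := [::]) Hp (erefl b : path b [::] b) H; rewrite !cats0. Qed.
Lemma gequiv_ctxr a b d q u v : path b q d -> gequiv a b u v -> gequiv a d (u ++ q) (v ++ q).
Proof. by move=> Hq H; have := gequiv_ctx (p := [::]) (erefl a : path a [::] a) Hq H. Qed.

Lemma gequiv_cat a b c u u' v v' : gequiv a b u u' -> gequiv b c v v' ->
  gequiv a c (u ++ v) (u' ++ v').
Proof.
move=> H1 H2; have [_ Hu' _] := H1; have [Hv _ _] := H2.
exact: gequiv_trans (gequiv_ctxr Hv H1) (gequiv_ctxl Hu' H2).
Qed.

Lemma gequiv_inv a b x y : gequiv a b x y -> gequiv b a (inv x) (inv y).
Proof.
move=> H; have [Hx Hy _] := H.
have Hix := path_inv Hx; have Hiy := path_inv Hy.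
apply: (@gequiv_trans _ _ _ (inv x ++ y ++ inv y)).
  apply: gequiv_sym.
  have := red_gequiv (red_ctxl (inv x) (red_cancel y)) (path_cat Hix (path_cat Hy Hiy)).
  by rewrite cats0.
apply: gequiv_trans (gequiv_ctx Hix Hiy (gequiv_sym H)) _.
have := red_gequiv (red_ctxr (inv y) (red_cancel_l x)) (path_cat (path_cat Hix Hx) Hiy).
by rewrite -catA.
Qed.

Lemma step_rel (r s p q : seq (gletter D)) a b : crossing_rel r s -> path a (p ++ r ++ q) b ->
  gequiv a b (p ++ r ++ q) (p ++ s ++ q).
Proof. by move=> Hr; apply: red_gequiv; apply: rt_step; apply: gs_rel. Qed.

Lemma step_cancel (p : seq (gletter D)) l q a b : path a (p ++ l :: gflip l :: q) b ->
  gequiv a b (p ++ l :: gflip l :: q) (p ++ q).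
Proof. by apply: red_gequiv; apply: rt_step; apply: gs_cancel. Qed.

Lemma step_relinv (r s p q : seq (gletter D)) a b : crossing_rel r s -> path a (p ++ inv r ++ q) b ->
  gequiv a b (p ++ inv r ++ q) (p ++ inv s ++ q).
Proof.
move=> Hr /path_catE [m [Hp /path_catE [m' [Hir Hq]]]].
have Hr' := path_inv Hir; rewrite invK in Hr'.
apply: gequiv_ctx Hp Hq _.
have := gequiv_inv (step_rel (p := [::]) (q := [::]) Hr (path_cat Hr' (erefl m : path m [::] m))).
by rewrite /= !cats0.
Qed.

Definition C (s m : seq (gletter D)) := s ++ m ++ inv s.

Lemma inv_C s m : inv (C s m) = C s (inv m).
Proof. by rewrite /C !inv_cat invK catA. Qed.

Lemma C_path a T s m : path a s T -> path T m T -> path a (C s m) a.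
Proof. move=> Hs Hm; apply: path_cat Hs (path_cat Hm (path_inv Hs)). Qed.

Lemma C_equiv a T s m m' : path a s T -> gequiv T T m m' -> gequiv a a (C s m) (C s m').
Proof. move=> Hs H; exact: gequiv_ctx Hs (path_inv Hs) H. Qed.

Lemma C_mul a T s m m' : path a s T -> path T m T -> path T m' T ->
  gequiv a a (C s m ++ C s m') (C s (m ++ m')).
Proof.
move=> Hs Hm Hm'.
have := red_gequiv (red_ctx (s ++ m) (m' ++ inv s) (red_cancel_l s))
  (path_cat (path_cat Hs Hm) (path_cat (path_cat (path_inv Hs) Hs) (path_cat Hm' (path_inv Hs)))).
by rewrite /C /= -!catA.
Qed.


Section Main.
Variable sw : dreg D -> seq (gletter D).
Hypothesis Hsw : forall j, over_walk j (sw j).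
Hypothesis Huniq : forall (j : dreg D) w1 w2, over_walk j w1 -> over_walk j w2 ->
         gequiv (dtop D) j w1 w2.

Notation O := (dtop D).

Definition lP (i : dseg D) : gletter D := (i, true, false).
Definition lM (i : dseg D) : gletter D := (i, false, false).
Definition lP' (i : dseg D) : gletter D := (i, true, true).
Definition lM' (i : dseg D) : gletter D := (i, false, true).

Definition g (i : dseg D) := C (sw (dup i)) [:: lP i; lM' i].

Lemma sw_path j : path O (sw j) j.
Proof. by case: (Hsw j). Qed.

Lemma g_path i : path O (g i) O.
Proof. apply: C_path (sw_path _) _; rewrite /= /gsrc /gtgt /=; done. Qed.

Lemma g_walk i t : over_walk (dup i) t -> gequiv O O (g i) (C t [:: lP i; lM' i]).
Proof.
move=> Ht; have E := Huniq (Hsw _) Ht.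
have Hm : path (dup i) [:: lP i; lM' i] (dup i) by rewrite /= /gsrc /gtgt /=.
rewrite /g /C; exact: gequiv_cat E (gequiv_cat (gequiv_refl Hm) (gequiv_inv E)).
Qed.

Lemma C_snoc s l m : C (s ++ [:: l]) m = C s (l :: m ++ [:: gflip l]).
Proof. by rewrite /C inv_cat /= -!catA. Qed.

Section Cross.
Variable c : dcrs D.
Notation a1 := (din1 c).
Notation a2 := (din2 c).
Notation b1 := (dout1 c).
Notation b2 := (dout2 c).
Notation T := (dup (din1 c)).
Notation sT := (sw (dup (din1 c))).

Lemma E1 : dup (din1 c) = dup (dout2 c). Proof. by case: (Hinc c). Qed.
Lemma E2 : ddown (din1 c) = dup (din2 c). Proof. by case: (Hinc c). Qed.
Lemma E3 : ddown (din2 c) = ddown (dout1 c). Proof. by case: (Hinc c). Qed.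
Lemma E4 : ddown (dout2 c) = dup (dout1 c). Proof. by case: (Hinc c). Qed.

Ltac ptac := rewrite /= /lP /lM /lP' /lM' /gsrc /gtgt /=; rewrite ?E1 ?E2 ?E3 ?E4; repeat split.

Lemma loc1 : dpos c = true ->
  gequiv T T [:: lP b2; lP b1; lM' b1; lP' b2] [:: lP a1; lM' a1].
Proof.
move=> Hp.
have S1 : gequiv T T [:: lP b2; lP b1; lP' a2; lM' a1] [:: lP b2; lP b1; lM' b1; lP' b2].
  by apply: (step_relinv (p := [:: lP b2; lP b1]) (q := [::]) (cr_pos Hp)); ptac.
have S2 : gequiv T T [:: lP a1; lP a2; lP' a2; lM' a1] [:: lP b2; lP b1; lP' a2; lM' a1].
  by apply: (step_rel (p := [::]) (q := [:: lP' a2; lM' a1]) (cr_over c)); ptac.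
have S3 : gequiv T T [:: lP a1; lP a2; lP' a2; lM' a1] [:: lP a1; lM' a1].
  by apply: (step_cancel (p := [:: lP a1]) (l := lP a2) (q := [:: lM' a1])); ptac.
exact: gequiv_trans (gequiv_sym S1) (gequiv_trans (gequiv_sym S2) S3).
Qed.

Lemma loc2 : dpos c = false ->
  gequiv T T [:: lP b2; lM' b2] [:: lP a1; lP a2; lM' a2; lP' a1].
Proof.
move=> Hn.
have S1 : gequiv T T [:: lP a1; lP a2; lM' a2; lP' a1] [:: lP b2; lP b1; lM' a2; lP' a1].
  by apply: (step_rel (p := [::]) (q := [:: lM' a2; lP' a1]) (cr_over c)); ptac.
have S2 : gequiv T T [:: lP b2; lP b1; lM' a2; lP' a1] [:: lP b2; lP b1; lP' b1; lM' b2].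
  by apply: (step_relinv (p := [:: lP b2; lP b1]) (q := [::]) (cr_neg Hn)); ptac.
have S3 : gequiv T T [:: lP b2; lP b1; lP' b1; lM' b2] [:: lP b2; lM' b2].
  by apply: (step_cancel (p := [:: lP b2]) (l := lP b1) (q := [:: lM' b2])); ptac.
exact: gequiv_sym (gequiv_trans S1 (gequiv_trans S2 S3)).
Qed.

Lemma loc3 : dpos c = true ->
  gequiv T T [:: lP b2; lM' b2]
    [:: lM a1; lP' a1; lP a1; lP a2; lM' a2; lP' a1; lP a1; lM' a1].
Proof.
move=> Hp.
have S1 : gequiv T T [:: lM a1; lP' a1; lP a1; lP a2; lM' a2; lP' a1; lP a1; lM' a1]
                     [:: lM a1; lP a2; lM' a2; lP' a1; lP a1; lM' a1].
  by apply: (step_cancel (p := [:: lM a1]) (l := lP' a1) (q := [:: lP a2; lM' a2; lP' a1; lP a1; lM' a1])); ptac.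
have S2 : gequiv T T [:: lM a1; lP a2; lM' a2; lP' a1; lP a1; lM' a1]
                     [:: lM a1; lP a2; lM' a2; lM' a1].
  by apply: (step_cancel (p := [:: lM a1; lP a2; lM' a2]) (l := lP' a1) (q := [:: lM' a1])); ptac.
have S3 : gequiv T T [:: lM a1; lP a2; lM' a2; lM' a1] [:: lP b2; lM b1; lM' a2; lM' a1].
  by apply: (step_rel (p := [::]) (q := [:: lM' a2; lM' a1]) (cr_pos Hp)); ptac.
have S4 : gequiv T T [:: lP b2; lM b1; lM' a2; lM' a1] [:: lP b2; lM b1; lM' b1; lM' b2].
  by apply: (step_relinv (p := [:: lP b2; lM b1]) (q := [::]) (cr_under c)); ptac.
have S5 : gequiv T T [:: lP b2; lM b1; lM' b1; lM' b2] [:: lP b2; lM' b2].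
  by apply: (step_cancel (p := [:: lP b2]) (l := lM b1) (q := [:: lM' b2])); ptac.
exact: gequiv_sym (gequiv_trans S1 (gequiv_trans S2 (gequiv_trans S3 (gequiv_trans S4 S5)))).
Qed.

Lemma loc4 : dpos c = false ->
  gequiv T T [:: lP b2; lP b1; lM' b1; lP' b2]
    [:: lP a1; lP a2; lM' a2; lP' a1; lP a1; lM' a1; lP a1; lM a2; lP' a2; lP' a1].
Proof.
move=> Hn.
have S1 : gequiv T T [:: lP a1; lP a2; lM' a2; lP' a1; lP a1; lM' a1; lP a1; lM a2; lP' a2; lP' a1]
                     [:: lP a1; lP a2; lM' a2; lM' a1; lP a1; lM a2; lP' a2; lP' a1].
  by apply: (step_cancel (p := [:: lP a1; lP a2; lM' a2]) (l := lP' a1) (q := [:: lM' a1; lP a1; lM a2; lP' a2; lP' a1])); ptac.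
have S2 : gequiv T T [:: lP a1; lP a2; lM' a2; lM' a1; lP a1; lM a2; lP' a2; lP' a1]
                     [:: lP b2; lP b1; lM' a2; lM' a1; lP a1; lM a2; lP' a2; lP' a1].
  by apply: (step_rel (p := [::]) (q := [:: lM' a2; lM' a1; lP a1; lM a2; lP' a2; lP' a1]) (cr_over c)); ptac.
have S3 : gequiv T T [:: lP b2; lP b1; lM' a2; lM' a1; lP a1; lM a2; lP' a2; lP' a1]
                     [:: lP b2; lP b1; lM' b1; lM' b2; lP a1; lM a2; lP' a2; lP' a1].
  by apply: (step_relinv (p := [:: lP b2; lP b1]) (q := [:: lP a1; lM a2; lP' a2; lP' a1]) (cr_under c)); ptac.
have S4 : gequiv T T [:: lP b2; lP b1; lM' b1; lM' b2; lP a1; lM a2; lP' a2; lP' a1]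
                     [:: lP b2; lP b1; lM' b1; lM' b2; lM b2; lP b1; lP' a2; lP' a1].
  by apply: (step_rel (p := [:: lP b2; lP b1; lM' b1; lM' b2]) (q := [:: lP' a2; lP' a1]) (cr_neg Hn)); ptac.
have S5 : gequiv T T [:: lP b2; lP b1; lM' b1; lM' b2; lM b2; lP b1; lP' a2; lP' a1]
                     [:: lP b2; lP b1; lM' b1; lM' b2; lM b2; lP b1; lP' b1; lP' b2].
  by apply: (step_relinv (p := [:: lP b2; lP b1; lM' b1; lM' b2; lM b2; lP b1]) (q := [::]) (cr_over c)); ptac.
have S6 : gequiv T T [:: lP b2; lP b1; lM' b1; lM' b2; lM b2; lP b1; lP' b1; lP' b2]
                     [:: lP b2; lP b1; lM' b1; lP b1; lP' b1; lP' b2].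
  by apply: (step_cancel (p := [:: lP b2; lP b1; lM' b1]) (l := lM' b2) (q := [:: lP b1; lP' b1; lP' b2])); ptac.
have S7 : gequiv T T [:: lP b2; lP b1; lM' b1; lP b1; lP' b1; lP' b2]
                     [:: lP b2; lP b1; lM' b1; lP' b2].
  by apply: (step_cancel (p := [:: lP b2; lP b1; lM' b1]) (l := lP b1) (q := [:: lP' b2])); ptac.
exact: gequiv_sym (gequiv_trans S1 (gequiv_trans S2 (gequiv_trans S3
  (gequiv_trans S4 (gequiv_trans S5 (gequiv_trans S6 S7)))))).
Qed.

Lemma HsT : path O sT T.
Proof. exact: sw_path. Qed.

Lemma walkT : over_walk (dup b2) sT.
Proof. split; first by case: (Hsw T). rewrite -E1; exact: sw_path. Qed.

Lemma walkL : over_walk (dup a2) (sT ++ [:: lP a1]).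
Proof.
split; first by rewrite all_cat; case: (Hsw T) => -> _.
apply: path_cat (sw_path T) _; ptac.
Qed.

Lemma walkR : over_walk (dup b1) (sT ++ [:: lP b2]).
Proof.
split; first by rewrite all_cat; case: (Hsw T) => -> _.
apply: path_cat (sw_path T) _; ptac.
Qed.

Lemma gb1 : gequiv O O (g b1) (C sT [:: lP b2; lP b1; lM' b1; lP' b2]).
Proof. have H := g_walk walkR; rewrite C_snoc in H; exact H. Qed.
Lemma ga2 : gequiv O O (g a2) (C sT [:: lP a1; lP a2; lM' a2; lP' a1]).
Proof. have H := g_walk walkL; rewrite C_snoc in H; exact H. Qed.
Lemma gb2 : gequiv O O (g b2) (C sT [:: lP b2; lM' b2]).
Proof. exact: g_walk walkT. Qed.

Lemma next_pos : dpos c = true -> gequiv O O (g a1) (g b1).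
Proof. move=> Hp; exact: gequiv_sym (gequiv_trans gb1 (C_equiv HsT (loc1 Hp))). Qed.

Lemma next_neg : dpos c = false -> gequiv O O (g a2) (g b2).
Proof.
move=> Hn; exact: gequiv_trans ga2 (gequiv_sym (gequiv_trans gb2 (C_equiv HsT (loc2 Hn)))).
Qed.

Lemma wirt_pos : dpos c = true -> gequiv O O (g b2) (inv (g a1) ++ (g a2 ++ g a1)).
Proof.
move=> Hp.
apply: gequiv_trans (gequiv_trans gb2 (C_equiv HsT (loc3 Hp))) _.
have P0 : path T [:: lM a1; lP' a1] T by ptac.
have P1 : path T [:: lP a1; lM' a1] T by ptac.
have P2 : path T [:: lP a1; lP a2; lM' a2; lP' a1] T by ptac.
have P21 : path T ([:: lP a1; lP a2; lM' a2; lP' a1] ++ [:: lP a1; lM' a1]) T by ptac.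
have H1 := gequiv_cat (gequiv_refl (C_path HsT P0)) (gequiv_cat ga2 (gequiv_refl (C_path HsT P1))).
have H2 := gequiv_ctxl (C_path HsT P0) (C_mul HsT P2 P1).
have H3 := C_mul HsT P0 P21.
have HI : inv (g a1) = C sT [:: lM a1; lP' a1] by rewrite /g inv_C.
rewrite HI; apply: gequiv_sym; exact: gequiv_trans H1 (gequiv_trans H2 H3).
Qed.

Lemma wirt_neg : dpos c = false -> gequiv O O (g b1) (g a2 ++ (g a1 ++ inv (g a2))).
Proof.
move=> Hn.
apply: gequiv_trans (gequiv_trans gb1 (C_equiv HsT (loc4 Hn))) _.
have P1 : path T [:: lP a1; lM' a1] T by ptac.
have P2 : path T [:: lP a1; lP a2; lM' a2; lP' a1] T by ptac.
have P3 : path T [:: lP a1; lM a2; lP' a2; lP' a1] T by ptac.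
have P13 : path T ([:: lP a1; lM' a1] ++ [:: lP a1; lM a2; lP' a2; lP' a1]) T by ptac.
have G3 := gequiv_inv ga2; rewrite inv_C in G3.
have H1 := gequiv_cat ga2 (gequiv_cat (gequiv_refl (C_path HsT P1)) G3).
have H2 := gequiv_ctxl (C_path HsT P2) (C_mul HsT P1 P3).
have H3 := C_mul HsT P2 P13.
apply: gequiv_sym; exact: gequiv_trans H1 (gequiv_trans H2 H3).
Qed.

End Cross.

Definition Fl (e : wletter D) := if e.2 then inv (g e.1) else g e.1.
Definition F (u : seq (wletter D)) := flatten (map Fl u).

Lemma Fl_path (e : wletter D) : path O (Fl e) O.
Proof. case: e => i [] /=; [exact: path_inv (g_path i) | exact: g_path]. Qed.

Lemma F_path (u : seq (wletter D)) : path O (F u) O.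
Proof. elim: u => [|x u IH] //=; exact: path_cat (Fl_path x) IH. Qed.

Lemma F_cat (u v : seq (wletter D)) : F (u ++ v) = F u ++ F v.
Proof. by rewrite /F map_cat flatten_cat. Qed.

Lemma over_next_g i j : over_next i j -> gequiv O O (g i) (g j).
Proof. case=> c0 H; [exact: next_pos | exact: next_neg]. Qed.

Lemma same_arc_g i j : same_arc i j -> gequiv O O (g i) (g j).
Proof.
elim=> [x y H|x|x y _ IH|x y z _ IH1 _ IH2].
- exact: over_next_g.
- exact: gequiv_refl (g_path x).
- exact: gequiv_sym.
- exact: gequiv_trans IH1 IH2.
Qed.

Lemma wirt_F (r s : seq (wletter D)) : wirt_rel r s -> gequiv O O (F r) (F s).
Proof.
case=> c0 H; rewrite /F /Fl /= !cats0; [exact: wirt_pos | exact: wirt_neg].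
Qed.

Lemma F_wequiv (u v : seq (wletter D)) : wequiv u v -> gequiv O O (F u) (F v).
Proof.
elim=> [x y H|x|x y _ IH|x y z _ IH1 _ IH2].
- case: H => [u1 i e v1|u1 r s v1 Hr|u1 i j e v1 Ha]; rewrite !F_cat.
  + apply: red_gequiv; last exact: path_cat (F_path _) (F_path _).
    apply: red_ctxl; rewrite /F /= catA; have R : red (Fl (i, e) ++ Fl (i, ~~ e)) [::].
      by case: e => /=; [exact: red_cancel_l | exact: red_cancel].
    exact: (red_ctxr (flatten (map Fl v1)) R).
  + exact: gequiv_ctx (F_path _) (F_path _) (wirt_F Hr).
  + rewrite /F /=.
    apply: gequiv_ctx (F_path _) (F_path _) _.
    have H := same_arc_g Ha; case: e => /=; last exact: H.
    exact: gequiv_inv H.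
- exact: gequiv_refl (F_path x).
- exact: gequiv_sym.
- exact: gequiv_trans IH1 IH2.
Qed.

End Main.
End Gen.

Theorem theorem3p5 (D : diagram) (HD : tangle_diagram D) :
  exists F : seq (wletter D) -> seq (gletter D),
    [/\ (* F takes values in Aut(0) *)
        (forall u, is_gpath (dtop D) (F u) (dtop D)),
        (* well defined on pi(D) *)
        (forall u v, wequiv u v -> gequiv (dtop D) (dtop D) (F u) (F v)),
        (* homomorphism (composition left to right) *)
        (forall u v, gequiv (dtop D) (dtop D) (F (u ++ v)) (F u ++ F v)) &
        (* value on the Wirtinger generator w_i *)
        (forall (i : dseg D) (s : seq (gletter D)),
            over_walk (dup i) s ->
            gequiv (dtop D) (dtop D) (F [:: (i, false)])
              (s ++ [:: (i, true, false); (i, false, true)] ++ ginvword s))].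
Proof.
case: HD => Hinc Hex Huniq.
pose sw j := proj1_sig (constructive_indefinite_description _ (Hex j)).
have Hsw : forall j, over_walk j (sw j).
  move=> j; exact: proj2_sig (constructive_indefinite_description _ (Hex j)).
exists (F sw); split.
- exact: (F_path Hsw).
- exact: (F_wequiv Hinc Hsw Huniq).
- move=> u v; rewrite F_cat; apply: gequiv_refl; exact: path_cat (F_path Hsw u) (F_path Hsw v).
- move=> i s Hs; rewrite /F /Fl /= cats0; exact: (g_walk Hinc Hsw Huniq Hs).
Qed.
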